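(* Let $F:\mathbb C^n\to\mathbb C^n$ be a square system of polynomials with real coefficients and let $I=(I_1,\dots,I_n)\in\mathbb{IC}^n$ be a strong interval approximate zero of $F$ for which there exist $x\in I$ and an invertible $Y\in\mathbb C^{n\times n}$ with $K_{x,Y}(I)\subset I$, $\sqrt2\,\lVert\mathbf 1_n-Y\cdot\square\mathrm JF(I)\rVert_\infty<1$ and $\{\bar z: z\in K_{x,Y}(I)\}\subset I$. If $\mathrm{Re}(I)>0$ (i.e., the real-part interval of every coordinate $I_k$ consists of positive numbers), then the unique zero of $F$ in $I$ is real and has all coordinates positive.
   Context: $\mathbb{IR}$ is the set of compact real intervals $[a,b]$, with operations $X\circ Y=\{x\circ y: x\in X,y\in Y\}$ for $\circ\in\{+,-,\cdot,/\}$ ($0\notin Y$ for division). $\mathbb{IC}=\{X+iY: X,Y\in\mathbb{IR}\}$ is the set of rectangular complex intervals, where $X+iY=\{x+iy:x\in X,y\in Y\}$ (so $\mathrm{Re}(X+iY)=X$), with operations defined for $I=X+iY$, $J=W+iZ$ by $I\pm J=(X\pm W)+i(Y\pm Z)$, $I\cdot J=(X W-YZ)+i(XZ+YW)$, $I/J=\frac{XW+YZ}{WW+ZZ}+i\frac{YW-XZ}{WW+ZZ}$. Operations on $\mathbb{IC}^n$ are componentwise; for an interval matrix $A=(A_{i,j})\in\mathbb{IC}^{n\times n}$ and $I\in\mathbb{IC}^n$, $A\cdot I:=\sum_{j=1}^n I_j\cdot(A_{1,j},\dots,A_{n,j})^T$. A point $x\in\mathbb C^n$ is identified with the degenerate interval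 vector $[\mathrm{Re}\,x,\mathrm{Re}\,x]+i[\mathrm{Im}\,x,\mathrm{Im}\,x]$. An interval enclosure of $F:\mathbb C^n\to\mathbb C^m$ is a map $\square F:\mathbb{IC}^n\to\mathbb{IC}^m$ with $\{F(x):x\in I\}\subseteq\square F(I)$ for all $I$; $\square F$ and $\square\mathrm JF$ denote fixed interval enclosures of $F$ and its Jacobian $\mathrm JF$. For $A\in\mathbb{IC}^{n\times n}$, $\lVert A\rVert_\infty:=\max_{B\in A}\max_{v\ne0}\lVert Bv\rVert_\infty/\lVert v\rVert_\infty$. The Krawczyk operator is $K_{x,Y}(I):=x-Y\cdot\square F(x)+(\mathbf 1_n-Y\cdot\square\mathrm JF(I))(I-x)$. $I$ is a strong interval approximate zero of $F$ if there exist $x\in I$ and invertible $Y$ with $K_{x,Y}(I)\subset I$ and $\sqrt2\,\lVert\mathbf 1_n-Y\cdot\square\mathrm JF(I)\rVert_\infty<1$; such an $I$ contains exactly one zero of $F$. *)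

(* Defs.v *)
From HB Require Import structures.
From mathcomp Require Import all_boot all_order all_algebra.
From mathcomp Require Import complex.
From mathcomp Require Import mpoly.
From mathcomp Require Import reals.
Set Implicit Arguments. Unset Strict Implicit. Unset Printing Implicit Defensive.
Import Order.TTheory GRing.Theory Num.Theory.
Local Open Scope ring_scope.

Section Intervals.
Variable R : rcfType.

Record itv := Itv { lo : R; hi : R }.

Definition itv_wf (X : itv) := lo X <= hi X.
Definition in_itv (x : R) (X : itv) := lo X <= x <= hi X.

Definition iadd (X Y : itv) := Itv (lo X + lo Y) (hi X + hi Y).
Definition isub (X Y : itv) := Itv (lo X - hi Y) (hi X - lo Y).
Definition imul (X Y : itv) :=
  let p1 := lo X * lo Y in let p2 := lo X * hi Y in
  let p3 := hi X * lo Y in let p4 := hi X * hi Y in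
  Itv (Num.min (Num.min p1 p2) (Num.min p3 p4))
      (Num.max (Num.max p1 p2) (Num.max p3 p4)).
Definition ipt (x : R) := Itv x x.

Record citv := CItv { cre : itv; cim : itv }.

Definition citv_wf (I : citv) := itv_wf (cre I) /\ itv_wf (cim I).
Definition in_citv (z : R[i]) (I : citv) :=
  in_itv (complex.Re z) (cre I) /\ in_itv (complex.Im z) (cim I).

Definition cadd (I J : citv) := CItv (iadd (cre I) (cre J)) (iadd (cim I) (cim J)).
Definition csub (I J : citv) := CItv (isub (cre I) (cre J)) (isub (cim I) (cim J)).
Definition cmul (I J : citv) :=
  CItv (isub (imul (cre I) (cre J)) (imul (cim I) (cim J)))
       (iadd (imul (cre I) (cim J)) (imul (cim I) (cre J))).
Definition cpt (z : R[i]) := CItv (ipt (complex.Re z)) (ipt (complex.Im z)).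

Variable n : nat.
Definition civec := 'I_n -> citv.
Definition cimat := 'I_n -> 'I_n -> citv.

Definition in_civec (z : 'I_n -> R[i]) (I : civec) := forall k, in_citv (z k) (I k).
Definition civec_wf (I : civec) := forall k, citv_wf (I k).
Definition in_cimat (B : 'M[R[i]]_n) (A : cimat) := forall i j, in_citv (B i j) (A i j).

Definition vpt (z : 'I_n -> R[i]) : civec := fun k => cpt (z k).
Definition mpt (B : 'M[R[i]]_n) : cimat := fun i j => cpt (B i j).

Definition vadd (I J : civec) : civec := fun k => cadd (I k) (J k).
Definition vsub (I J : civec) : civec := fun k => csub (I k) (J k).
Definition msub (A B : cimat) : cimat := fun i j => csub (A i j) (B i j).

Definition czero := cpt 0.
Definition mvmul (A : cimat) (I : civec) : civec :=
  fun i => \big[cadd/czero]_(j < n) cmul (I j) (A i j).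
Definition mmmul (A B : cimat) : cimat :=
  fun i j => mvmul A (fun k => B k j) i.

Definition civec_sub (K I : civec) :=
  forall z, in_civec z K -> in_civec z I.

Definition cmod (z : R[i]) : R := Num.sqrt (complex.Re z ^+ 2 + complex.Im z ^+ 2).
Definition vnorm_inf (v : 'I_n -> R[i]) : R := \big[Num.max/0]_(k < n) cmod (v k).
Definition mapply (B : 'M[R[i]]_n) (v : 'I_n -> R[i]) : 'I_n -> R[i] :=
  fun i => \sum_(j < n) B i j * v j.
(* c = ||A||_oo := max_{B in A} max_{v <> 0} ||Bv||_oo / ||v||_oo,
   i.e. c is an upper bound of these quotients and is attained *)
Definition imat_norm_is (A : cimat) (c : R) :=
  (forall B v, in_cimat B A -> (exists k, v k != 0) ->
     vnorm_inf (mapply B v) / vnorm_inf v <= c) /\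
  (exists B v, [/\ in_cimat B A, (exists k, v k != 0) &
     vnorm_inf (mapply B v) / vnorm_inf v = c]).

Definition polyF (P : 'I_n -> {mpoly R[n]}) (z : 'I_n -> R[i]) : 'I_n -> R[i] :=
  fun i => (map_mpoly (real_complex R) (P i)).@[z].
Definition polyJF (P : 'I_n -> {mpoly R[n]}) (z : 'I_n -> R[i]) : 'M[R[i]]_n :=
  \matrix_(i, j) (map_mpoly (real_complex R) (mderiv j (P i))).@[z].

Definition is_enclosure (f : ('I_n -> R[i]) -> 'I_n -> R[i]) (bF : civec -> civec) :=
  forall I z, in_civec z I -> in_civec (f z) (bF I).
Definition is_mat_enclosure (f : ('I_n -> R[i]) -> 'M[R[i]]_n) (bJ : civec -> cimat) :=
  forall I z, in_civec z I -> in_cimat (f z) (bJ I).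

Definition krawczyk (bF : civec -> civec) (bJ : civec -> cimat)
    (x : 'I_n -> R[i]) (Y : 'M[R[i]]_n) (I : civec) : civec :=
  vadd (vsub (vpt x) (mvmul (mpt Y) (bF (vpt x))))
       (mvmul (msub (mpt 1%:M) (mmmul (mpt Y) (bJ I))) (vsub I (vpt x))).

End Intervals.

(* Main.v *)
Require Import Defs.
From HB Require Import structures.
From mathcomp Require Import all_boot all_order all_algebra.
From mathcomp Require Import complex.
From mathcomp Require Import mpoly.
From mathcomp Require Import reals.
From mathcomp Require Import polyrcf.
From mathcomp Require Import boolp classical_sets.
From mathcomp Require Import lra ring.
Import Defs.
Set Implicit Arguments. Unset Strict Implicit. Unset Printing Implicit Defensive.
Import Order.TTheory GRing.Theory Num.Theory.
Local Open Scope ring_scope.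


Section Basic.
Variable R : rcfType.
Local Notation C := (R[i]).

Lemma ReM (z w : C) : complex.Re (z * w) = complex.Re z * complex.Re w - complex.Im z * complex.Im w.
Proof. by case: z w => a b [c d]. Qed.
Lemma ImM (z w : C) : complex.Im (z * w) = complex.Re z * complex.Im w + complex.Im z * complex.Re w.
Proof. by case: z w => a b [c d]. Qed.
Lemma ReD (z w : C) : complex.Re (z + w) = complex.Re z + complex.Re w.
Proof. by case: z w => a b [c d]. Qed.
Lemma ImD (z w : C) : complex.Im (z + w) = complex.Im z + complex.Im w.
Proof. by case: z w => a b [c d]. Qed.
Lemma ReB (z w : C) : complex.Re (z - w) = complex.Re z - complex.Re w.
Proof. by case: z w => a b [c d]. Qed.
Lemma ImB (z w : C) : complex.Im (z - w) = complex.Im z - complex.Im w.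
Proof. by case: z w => a b [c d]. Qed.
Lemma Re0 : complex.Re (0 : C) = 0. Proof. by []. Qed.
Lemma Im0 : complex.Im (0 : C) = 0. Proof. by []. Qed.

Lemma mul_between (a b x y : R) : a <= x <= b ->
  (a * y <= x * y <= b * y) \/ (b * y <= x * y <= a * y).
Proof.
move=> /andP[h1 h2]; have [y0|y0] := lerP 0 y.
  by left; rewrite !ler_wpM2r.
by right; rewrite !ler_wnM2r // ltW.
Qed.

Lemma in_imul (X Y : itv R) (x y : R) : in_itv x X -> in_itv y Y -> in_itv (x * y) (imul X Y).
Proof.
rewrite /in_itv /imul /= => hx hy.
have [h|h] := mul_between (y) hx;
rewrite mulrC in h; rewrite [_ * y]mulrC in h; 
(have [h1|h1] := mul_between (lo X) hy);
(have [h2|h2] := mul_between (hi X) hy);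
move: h h1 h2; rewrite ![y * _]mulrC ![lo Y * _]mulrC ![hi Y * _]mulrC;
move=> /andP[h h'] /andP[h1 h1'] /andP[h2 h2'];
rewrite !ge_min !le_max ?(le_trans h1 h) ?(le_trans h2 h) ?(le_trans h h1') ?(le_trans h h2')
  ?(le_trans h1 h') ?(le_trans h2 h') ?(le_trans h' h1') ?(le_trans h' h2') ?orbT //.
Qed.

Lemma in_iadd (X Y : itv R) (x y : R) : in_itv x X -> in_itv y Y -> in_itv (x + y) (iadd X Y).
Proof. rewrite /in_itv /= => /andP[? ?] /andP[? ?]; apply/andP; split; lra. Qed.
Lemma in_isub (X Y : itv R) (x y : R) : in_itv x X -> in_itv y Y -> in_itv (x - y) (isub X Y).
Proof. rewrite /in_itv /= => /andP[? ?] /andP[? ?]; apply/andP; split; lra. Qed.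

Lemma in_cadd (I J : citv R) (z w : C) : in_citv z I -> in_citv w J -> in_citv (z + w) (cadd I J).
Proof. by move=> [h1 h2] [h3 h4]; split; rewrite /= ?ReD ?ImD; apply: in_iadd. Qed.
Lemma in_csub (I J : citv R) (z w : C) : in_citv z I -> in_citv w J -> in_citv (z - w) (csub I J).
Proof. by move=> [h1 h2] [h3 h4]; split; rewrite /= ?ReB ?ImB; apply: in_isub. Qed.
Lemma in_cmul (I J : citv R) (z w : C) : in_citv z I -> in_citv w J -> in_citv (z * w) (cmul I J).
Proof.
move=> [h1 h2] [h3 h4]; split; rewrite /= ?ReM ?ImM.
  by apply: in_isub; apply: in_imul.
by apply: in_iadd; apply: in_imul.
Qed.
Lemma in_cpt (z : C) : in_citv z (cpt z).
Proof. by split; rewrite /in_itv /= lexx. Qed.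
Lemma in_czero : in_citv (0 : C) (czero R).
Proof. exact: in_cpt. Qed.

Lemma in_cbig (m : nat) (F : 'I_m -> C) (J : 'I_m -> citv R) :
  (forall j, in_citv (F j) (J j)) ->
  in_citv (\sum_(j < m) F j) (\big[@cadd R/czero R]_(j < m) J j).
Proof.
move=> h; apply: (big_rec2 (fun s I => in_citv s I)); first exact: in_czero.
by move=> j y1 y2 _ hy; apply: in_cadd.
Qed.

End Basic.

Section Vec.
Variable R : rcfType.
Variable n : nat.
Local Notation C := (R[i]).

Lemma in_mvmul (A : cimat R n) (V : civec R n) (B : 'M[C]_n) (v : 'I_n -> C) :
  in_cimat B A -> in_civec v V ->
  forall i, in_citv (\sum_j v j * B i j) (mvmul A V i).
Proof. by move=> hB hv i; apply: in_cbig => j; apply: in_cmul. Qed.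

Lemma in_mpt (B : 'M[C]_n) : in_cimat B (mpt B).
Proof. by move=> i j; apply: in_cpt. Qed.
Lemma in_vpt (v : 'I_n -> C) : in_civec v (vpt v).
Proof. by move=> i; apply: in_cpt. Qed.

Lemma in_Bmat (bJ : civec R n -> cimat R n) (I : civec R n) (Y M : 'M[C]_n) :
  in_cimat M (bJ I) ->
  in_cimat (1%:M - Y *m M) (msub (mpt 1%:M) (mmmul (mpt Y) (bJ I))).
Proof.
move=> hM i j.
have -> : (1%:M - Y *m M) i j = 1%:M i j - (Y *m M) i j by rewrite !mxE.
apply: in_csub; first exact: in_mpt.
rewrite mxE /mmmul.
under eq_bigr do rewrite mulrC.
by apply: (in_mvmul (v := fun k => M k j)) => //; apply: in_mpt.
Qed.

Lemma in_krawczyk (bF : civec R n -> civec R n) (bJ : civec R n -> cimat R n)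
   (x : 'I_n -> C) (Y : 'M[C]_n) (I : civec R n) (v Fx : 'I_n -> C) (M : 'M[C]_n) :
  in_civec Fx (bF (vpt x)) -> in_civec v I -> in_cimat M (bJ I) ->
  in_civec (fun i => x i - \sum_j Fx j * Y i j + \sum_j (v j - x j) * (1%:M - Y *m M) i j)
    (krawczyk bF bJ x Y I).
Proof.
move=> hF hv hM i; rewrite /krawczyk /vadd /vsub; apply: in_cadd.
  apply: in_csub; first exact: in_vpt.
  by apply: in_mvmul => //; apply: in_mpt.
apply: in_mvmul; first exact: in_Bmat.
by move=> j; apply: in_csub => //; apply: in_vpt.
Qed.

End Vec.

Section Norms.
Variable R : rcfType.
Local Notation C := (R[i]).

Lemma cmod_normc (z : C) : cmod z = Normc.normc z.
Proof. by case: z. Qed.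
Lemma cmod_ge0 (z : C) : 0 <= cmod z.
Proof. exact: sqrtr_ge0. Qed.
Lemma cmod_eq0 (z : C) : cmod z = 0 -> z = 0.
Proof. by rewrite cmod_normc => /Normc.eq0_normc. Qed.
Lemma cmod_gt0 (z : C) : z != 0 -> 0 < cmod z.
Proof.
move=> nz; rewrite lt_def cmod_ge0 andbT; apply/eqP => /cmod_eq0 h.
by rewrite h eqxx in nz.
Qed.
Lemma cmodD (z w : C) : cmod (z + w) <= cmod z + cmod w.
Proof. rewrite !cmod_normc; exact: le_normcD. Qed.
Lemma cmodM (z w : C) : cmod (z * w) = cmod z * cmod w.
Proof. rewrite !cmod_normc; exact: Normc.normcM. Qed.
Lemma cmodN (z : C) : cmod (- z) = cmod z.
Proof. rewrite !cmod_normc; exact: normcN. Qed.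
Lemma cmod0 : cmod (0 : C) = 0.
Proof. by rewrite /cmod /= expr0n /= addr0 sqrtr0. Qed.
Lemma cmod_Re (z : C) : `|complex.Re z| <= cmod z.
Proof.
rewrite /cmod -sqrtr_sqr ler_sqrt ?addr_ge0 ?sqr_ge0 //.
by rewrite lerDl sqr_ge0.
Qed.
Lemma cmod_Im (z : C) : `|complex.Im z| <= cmod z.
Proof.
rewrite /cmod -sqrtr_sqr ler_sqrt ?addr_ge0 ?sqr_ge0 //.
by rewrite lerDr sqr_ge0.
Qed.
Lemma cmod_le (z : C) : cmod z <= `|complex.Re z| + `|complex.Im z|.
Proof.
rewrite /cmod.
have h : 0 <= `|complex.Re z| + `|complex.Im z| by rewrite addr_ge0.
rewrite -(ger0_norm h) -(sqrtr_sqr (`|complex.Re z| + `|complex.Im z|)) ler_sqrt ?sqr_ge0 //.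
rewrite sqrrD !real_normK ?num_real //.
by rewrite -addrA lerD2l lerDr mulrn_wge0 // mulr_ge0.
Qed.

Variable n : nat.

Lemma vnorm_ge0 (v : 'I_n -> C) : 0 <= vnorm_inf v.
Proof.
rewrite /vnorm_inf; apply: (big_ind (fun s => 0 <= s)) => //.
  by move=> a b ha hb; rewrite le_max ha.
by move=> k _; apply: cmod_ge0.
Qed.
Lemma vnorm_coord (v : 'I_n -> C) k : cmod (v k) <= vnorm_inf v.
Proof.
rewrite /vnorm_inf (bigD1 k) //= le_max lexx //.
Qed.
Lemma vnorm_le (v : 'I_n -> C) b : 0 <= b -> (forall k, cmod (v k) <= b) -> vnorm_inf v <= b.
Proof.
move=> b0 h; rewrite /vnorm_inf; apply: (big_ind (fun s => s <= b)) => //.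
by move=> x y hx hy; rewrite ge_max hx hy.

Qed.
Lemma vnorm_eq0 (v : 'I_n -> C) : vnorm_inf v <= 0 -> forall k, v k = 0.
Proof.
move=> h k; apply: cmod_eq0; apply/eqP; rewrite eq_le cmod_ge0 andbT.
exact: le_trans (vnorm_coord v k) h.
Qed.
Lemma vnormD (u w : 'I_n -> C) : vnorm_inf (fun k => u k + w k) <= vnorm_inf u + vnorm_inf w.
Proof.
apply: vnorm_le; first by rewrite addr_ge0 ?vnorm_ge0.
by move=> k; apply: le_trans (cmodD _ _) _; apply: lerD; apply: vnorm_coord.
Qed.
Lemma vnormN (u : 'I_n -> C) : vnorm_inf (fun k => - u k) = vnorm_inf u.
Proof. by rewrite /vnorm_inf; apply: eq_bigr => k _; rewrite cmodN. Qed.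

Lemma contraction (A : cimat R n) (c : R) (B : 'M[C]_n) (v : 'I_n -> C) :
  imat_norm_is A c -> in_cimat B A -> vnorm_inf (mapply B v) <= c * vnorm_inf v.
Proof.
move=> [h1 _] hB; have [/existsP [k hk]|] := boolP [exists k, v k != 0].
  have hp : 0 < vnorm_inf v by apply: lt_le_trans (cmod_gt0 hk) (vnorm_coord v k).
  by rewrite -ler_pdivrMr //; apply: h1 => //; exists k.
rewrite negb_exists => /forallP h0.
have hv k : v k = 0 by apply/eqP; move: (h0 k); rewrite negbK.
suff -> : vnorm_inf (mapply B v) = 0.
  by rewrite (_ : vnorm_inf v = 0) ?mulr0 //; apply/eqP; rewrite eq_le vnorm_ge0 andbT;
     apply: vnorm_le => // k; rewrite hv cmod0.
apply/eqP; rewrite eq_le vnorm_ge0 andbT; apply: vnorm_le => // k.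
by rewrite /mapply big1 ?cmod0 // => j _; rewrite hv mulr0.
Qed.

Lemma norm_ratio_ge0 (A : cimat R n) (c : R) : imat_norm_is A c -> 0 <= c.
Proof. by move=> [_ [B [v [_ _ <-]]]]; rewrite divr_ge0 ?vnorm_ge0. Qed.

End Norms.


Lemma rmorph_meval (n : nat) (S T : comNzRingType) (f : {rmorphism S -> T})
   (p : {mpoly S[n]}) (v : 'I_n -> S) :
  f p.@[v] = (map_mpoly f p).@[fun i => f (v i)].
Proof.
elim/mpolyind: p => [|c m p _ _ ih]; first by rewrite !(raddf0, meval0).
rewrite mevalD rmorphD /= ih raddfD /= mevalD map_mpolyZ map_mpolyX !mevalZ !mevalX.
by rewrite rmorphM rmorph_prod /=; congr (_ * _ + _); apply: eq_bigr => i _; rewrite rmorphXn.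
Qed.

Section Chain.
Variable R : rcfType.
Local Notation C := (R[i]).
Variable n : nat.
Variables x d : 'I_n -> C.

Definition seg : 'I_n -> {poly C} := fun j => (x j)%:P + d j *: 'X.
Definition Qt_def (Q : {mpoly C[n]}) : {poly C} := (map_mpoly polyC Q).@[seg].
Fact Qt_key : unit. Proof. by []. Qed.
Definition Qt := locked_with Qt_key Qt_def.
Lemma QtE : Qt = Qt_def. Proof. exact: unlock. Qed.

Lemma QtD (P Q : {mpoly C[n]}) : Qt (P + Q) = Qt P + Qt Q.
Proof. by rewrite QtE /Qt_def raddfD mevalD. Qed.
Lemma QtM (P Q : {mpoly C[n]}) : Qt (P * Q) = Qt P * Qt Q.
Proof. by rewrite QtE /Qt_def rmorphM mevalM. Qed.
Lemma Qt0 : Qt 0 = 0.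
Proof. by rewrite QtE /Qt_def raddf0 meval0. Qed.
Lemma QtC c : Qt c%:MP = c%:P.
Proof. by rewrite QtE /Qt_def map_mpolyC mevalC. Qed.

Lemma Qt_eval Q t : (Qt Q).[t] = Q.@[fun j => x j + t * d j].
Proof.
rewrite -horner_evalE QtE /Qt_def rmorph_meval.
have -> : map_mpoly (horner_eval t) (map_mpoly polyC Q) = Q.
  by apply/mpolyP => m; rewrite !mcoeff_map_mpoly /= ?horner_evalE hornerC.
apply: meval_eq => j; rewrite -[LHS]/((seg j).[t]) /seg hornerD hornerC hornerZ hornerX.
by rewrite mulrC.
Qed.

Definition chain_prop (Q : {mpoly C[n]}) :=
  (Qt Q)^`() = \sum_j Qt (mderiv j Q) * (d j)%:P.

Lemma chainD P Q : chain_prop P -> chain_prop Q -> chain_prop (P + Q).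
Proof.
rewrite /chain_prop => hP hQ; rewrite QtD derivD hP hQ -big_split /=.
by apply: eq_bigr => j _; rewrite mderivD QtD mulrDl.
Qed.

Lemma chainM P Q : chain_prop P -> chain_prop Q -> chain_prop (P * Q).
Proof.
rewrite /chain_prop => hP hQ; rewrite QtM derivM hP hQ mulr_suml mulr_sumr -big_split /=.
apply: eq_bigr => j _; rewrite mderivM QtD !QtM.
by rewrite mulrDl -!mulrA [Qt Q * _]mulrC [Qt P * (_ * _)]mulrCA.
Qed.

Lemma chainC c : chain_prop c%:MP.
Proof.
rewrite /chain_prop QtC derivC big1 // => j _.
by rewrite mderivC Qt0 mul0r.
Qed.

Lemma chainX i : chain_prop 'X_i.
Proof.
rewrite /chain_prop.
have -> : Qt 'X_i = seg i by rewrite QtE /Qt_def map_mpolyX mevalXU.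
rewrite /seg derivD derivC derivZ derivX add0r.
rewrite (bigD1 i) //= big1 ?addr0.
  rewrite mderivX mnm1E eqxx.
  have -> : (U_(i) - U_(i))%MM = 0%MM by apply/mnmP => k; rewrite mnmBE mnm0E subnn.
  by rewrite mpolyX0 scale1r (QtC 1) mul1r alg_polyC.
move=> j hj; rewrite mderivX mnm1E eq_sym (negbTE hj) scale0r.
by rewrite Qt0 mul0r.
Qed.

Lemma chain_all Q : chain_prop Q.
Proof.
elim/mpolyind: Q => [|c m p _ _ ih]; first by rewrite -(mpolyC0) ; apply: chainC.
apply: chainD => //; rewrite -mul_mpolyC; apply: chainM; first exact: chainC.
rewrite mpolyXE_id; apply: (big_ind chain_prop) => //; first exact: (chainC 1).
  by move=> ? ? ; apply: chainM.
move=> j _; elim: (m j) => [|k ihk]; first by rewrite expr0; apply: (chainC 1).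
by rewrite exprS; apply: chainM => //; apply: chainX.
Qed.

End Chain.


Section Anti.
Local Open Scope complex_scope.
Variable R : rcfType.
Local Notation C := (R[i]).

Definition antid (q : {poly C}) : {poly C} :=
  \poly_(k < (size q).+1) (if k is k'.+1 then q`_k' / k%:R else 0).

Lemma antidK q : (antid q)^`() = q.
Proof.
apply/polyP => k; rewrite coef_deriv coef_poly; case: ifP => h.
  by rewrite /= -[_ *+ k.+1]mulr_natr divfK // pnatr_eq0.
by rewrite mul0rn nth_default //; move: h; rewrite ltnS => /negbT; rewrite -ltnNge.
Qed.

Lemma map_horner (f : {additive C -> R}) (hf : forall z r, f (z * r%:C) = f z * r) q t :
  (map_poly f q).[t] = f (q.[t%:C]).
Proof.
rewrite (horner_coef_wide _ (size_poly _ _)) horner_coef raddf_sum.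
apply: eq_bigr => k _; rewrite coef_map_id0 ?raddf0 //.
by rewrite -rmorphXn hf.
Qed.

Lemma map_deriv (f : {additive C -> R}) q : (map_poly f q)^`() = map_poly f (q^`()).
Proof.
apply/polyP => k; rewrite coef_deriv !coef_map_id0 ?raddf0 //.
by rewrite coef_deriv raddfMn.
Qed.

Lemma cReMr (z : C) (r : R) : complex.Re (z * r%:C) = complex.Re z * r.
Proof. by case: z => a b /=; rewrite mulr0 subr0. Qed.
Lemma cImMr (z : C) (r : R) : complex.Im (z * r%:C) = complex.Im z * r.
Proof. by case: z => a b /=; rewrite mulr0 add0r. Qed.

Lemma part_mvt (f : {additive C -> R}) (hf : forall z r, f (z * r%:C) = f z * r) (q : {poly C}) :
  exists2 t : R, 0 < t < 1 & f (q.[1]) - f (q.[0]) = f ((q^`()).[t%:C]).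
Proof.
have [t ht h] := poly_mvt (map_poly f q) (@ltr01 R).
exists t; first by apply/andP; split; rewrite (itvP ht).
move: h; rewrite subr0 mulr1 map_deriv !map_horner // => <- //.
Qed.

Lemma deriv0_eval (q : {poly C}) : q^`() = 0 -> q.[1] = q.[0].
Proof.
move=> h.
have hRe : complex.Re q.[1] = complex.Re q.[0].
  have [t _] := part_mvt (@cReMr) q; rewrite h horner0 raddf0 => /eqP.
  by rewrite subr_eq0 => /eqP.
have hIm : complex.Im q.[1] = complex.Im q.[0].
  have [t _] := part_mvt (@cImMr) q; rewrite h horner0 raddf0 => /eqP.
  by rewrite subr_eq0 => /eqP.
by move: hRe hIm; case: (q.[1]) => a b; case: (q.[0]) => c e /= -> ->.
Qed.

End Anti.


Section MV.
Local Open Scope complex_scope.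
Variable R : rcfType.
Local Notation C := (R[i]).
Variable n : nat.

Lemma mderiv_map (f : {additive R -> C}) (i : 'I_n) (p : {mpoly R[n]}) :
  mderiv i (map_mpoly f p) = map_mpoly f (mderiv i p).
Proof. by apply/mpolyP => m; rewrite mcoeff_mderiv !mcoeff_map_mpoly mcoeff_mderiv raddfMn. Qed.

Lemma cReMl (t : R) (w : C) : complex.Re (t%:C * w) = t * complex.Re w.
Proof. by case: w => a b /=; rewrite mul0r subr0. Qed.
Lemma cImMl (t : R) (w : C) : complex.Im (t%:C * w) = t * complex.Im w.
Proof. by case: w => a b /=; rewrite mul0r addr0. Qed.

Lemma convex_I (I : civec R n) (x z : 'I_n -> C) (t : R) :
  in_civec x I -> in_civec z I -> 0 <= t <= 1 ->
  in_civec (fun k => x k + t%:C * (z k - x k)) I.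
Proof.
move=> hx hz /andP[t0 t1] k.
case: (hx k) (hz k) => [/andP[a1 a2] /andP[b1 b2]] [/andP[c1 c2] /andP[e1 e2]].
split; rewrite /in_itv ?ReD ?ImD ?cReMl ?cImMl ?ReB ?ImB; apply/andP; split; nra.
Qed.

Lemma mean_value (P : 'I_n -> {mpoly R[n]}) (bJ : civec R n -> cimat R n)
   (I : civec R n) (x z : 'I_n -> C) :
  is_mat_enclosure (polyJF P) bJ -> in_civec x I -> in_civec z I ->
  exists M : 'M[C]_n, in_cimat M (bJ I) /\
    forall i, polyF P z i - polyF P x i = \sum_j M i j * (z j - x j).
Proof.
move=> hJ hx hz.
pose d := fun j => z j - x j.
pose Ps i j := antid (Qt x d (map_mpoly (real_complex R) (mderiv j (P i)))).
exists (\matrix_(i, j) ((Ps i j).[1] - (Ps i j).[0])); split.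
  move=> i j; rewrite mxE.
  have key : forall f : {additive C -> R}, (forall z r, f (z * r%:C) = f z * r) ->
      exists2 p, in_civec p I & f (Ps i j).[1] - f (Ps i j).[0] = f (polyJF P p i j).
    move=> f hf; have [t /andP[t0 t1] ->] := part_mvt hf (Ps i j).
    exists (fun k => x k + t%:C * d k); first by apply: convex_I => //; rewrite !ltW.
    by rewrite antidK Qt_eval mxE.
  have [p1 hp1 e1] := key _ (@cReMr R); have [p2 hp2 e2] := key _ (@cImMr R).
  split; rewrite raddfB /=.
    by rewrite e1; exact: (hJ I p1 hp1 i j).1.
  by rewrite e2; exact: (hJ I p2 hp2 i j).2.
move=> i; pose F := map_mpoly (real_complex R) (P i).
have hd : (\sum_j Ps i j * (d j)%:P - Qt x d F)^`() = 0.
  rewrite derivB raddf_sum /= chain_all; apply/eqP; rewrite subr_eq0; apply/eqP; apply: eq_bigr => j _.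
  by rewrite derivM derivC mulr0 addr0 antidK /F mderiv_map.
have := deriv0_eval hd.
rewrite !hornerE !horner_sum !Qt_eval.
under eq_bigr do rewrite hornerM hornerC.
under [X in _ = X - _]eq_bigr do rewrite hornerM hornerC.
have -> : F.@[fun j => x j + 1 * d j] = polyF P z i.
  by apply: meval_eq => j; rewrite mul1r /d addrC subrK.
have -> : F.@[fun j => x j + 0 * d j] = polyF P x i.
  by apply: meval_eq => j; rewrite mul0r addr0.
move=> h.
have -> : \sum_j (\matrix_(i0, j0) ((Ps i0 j0).[1] - (Ps i0 j0).[0])) i j * (z j - x j)
   = \sum_j (Ps i j).[1] * d j - \sum_j (Ps i j).[0] * d j.
  by rewrite -sumrB; apply: eq_bigr => j _; rewrite mxE mulrBl.
set A := \sum_j (Ps i j).[1] * d j; set B := \sum_j (Ps i j).[0] * d j.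
rewrite (_ : A = B - polyF P x i + polyF P z i); last by rewrite -h subrK.
ring.
Qed.

End MV.


Section Lim.
Variable R : realType.

Lemma bernoulli (h : R) k : 0 <= h -> 1 + k%:R * h <= (1 + h) ^+ k.
Proof.
move=> h0; elim: k => [|k ih]; first by rewrite mul0r addr0 expr0.
rewrite exprS -natr1.
have e : 0 <= (1 + h) ^+ k by rewrite exprn_ge0 // addr_ge0.
have k0 : 0 <= (k%:R : R) by [].
have kh : 0 <= (k%:R : R) * h * h by rewrite !mulr_ge0.
nra.
Qed.

Lemma geo_zero (c K N : R) : 0 <= c < 1 -> (forall k, N <= K * c ^+ k) -> N <= 0.
Proof.
move=> /andP[c0 c1] h; rewrite leNgt; apply/negP => N0.
have K0 : N <= K by have := h 0%N; rewrite expr0 mulr1.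
have [c00|cpos] := eqVneq c 0.
  by have := h 1%N; rewrite c00 expr1 mulr0 leNgt N0.
have cp : 0 < c by rewrite lt_def cpos c0.
pose hh := c^-1 - 1.
have hh0 : 0 < hh by rewrite /hh subr_gt0 invf_gt1.
pose x := K / (N * hh).
have Kp : 0 <= K by lra.
have x0 : 0 <= x by rewrite /x divr_ge0 // mulr_ge0 // ltW.
have := archi_boundP x0; set k := Num.Def.archi_bound x => hk.
have hb := bernoulli k (ltW hh0).
have e1 : 1 + hh = c^-1 by rewrite /hh addrC subrK.
rewrite e1 exprVn in hb.
have ck : 0 < c ^+ k by rewrite exprn_gt0.
have := h k => hNk.
have h2 : N * (1 + k%:R * hh) <= K.
  apply: le_trans (_ : N * (c ^+ k)^-1 <= K).
    by rewrite ler_pM2l.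
  by rewrite -ler_pdivlMr ?invr_gt0 // invrK.
have hk' : K < k%:R * (N * hh) by move: hk; rewrite /x ltr_pdivrMr // mulr_gt0.
nra.
Qed.

Definition limv (u : nat -> R) (D c : R) : R :=
  sup (range (fun k => u k - D / (1 - c) * c ^+ k)).

Lemma mono_nat (f : nat -> R) : (forall k, f k <= f k.+1) -> forall m k, (m <= k)%N -> f m <= f k.
Proof.
move=> h m k; elim: k => [|k ih]; first by rewrite leqn0 => /eqP ->.
rewrite leq_eqVlt => /orP[/eqP -> //|]; rewrite ltnS => /ih hm.
exact: le_trans hm (h k).
Qed.

Lemma limvP (u : nat -> R) (D c lo hi : R) :
  0 <= c < 1 -> 0 <= D -> (forall k, lo <= u k <= hi) ->
  (forall k, `|u k.+1 - u k| <= D * c ^+ k) ->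
  lo <= limv u D c <= hi /\ forall k, `|limv u D c - u k| <= D / (1 - c) * c ^+ k.
Proof.
move=> /andP[c0 c1] D0 hb hs.
pose T k := D / (1 - c) * c ^+ k.
have T0 k : 0 <= T k by rewrite /T mulr_ge0 ?exprn_ge0 ?divr_ge0 // subr_ge0 ltW.
have TS k : T k - T k.+1 = D * c ^+ k.
  rewrite /T exprS; field; by rewrite subr_eq0 eq_sym lt_eqF.
pose a k := u k - T k. pose b k := u k + T k.
have aS k : a k <= a k.+1.
  have := hs k; rewrite /a ler_norml => /andP[h1 h2]; have := TS k; lra.
have bS k : b k.+1 <= b k.
  have := hs k; rewrite /b ler_norml => /andP[h1 h2]; have := TS k; lra.
have amono := mono_nat aS.
have bmono : forall m k, (m <= k)%N -> b k <= b m.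
  have hn : forall j, - b j <= - b j.+1 by move=> j; rewrite lerN2.
  by move=> m k hmk; have := mono_nat hn hmk; rewrite lerN2.
have ab m k : a m <= b k.
  have [hmk|hkm] := leqP m k.
    apply: le_trans (amono _ _ hmk) _; rewrite /a /b; have := T0 k; lra.
  apply: le_trans (_ : b m <= _); last exact: bmono (ltnW hkm).
  rewrite /a /b; have := T0 m; lra.
have hub : has_ubound (range a) by exists (b 0%N) => y [k _ <-]; exact: ab.
have ha k : a k <= limv u D c by apply: ub_le_sup => //; exists k.
have hbk k : limv u D c <= b k by apply: ge_sup; [exists (a 0%N), 0%N | move=> y [m _ <-]; exact: ab].
have main k : `|limv u D c - u k| <= T k.
  by rewrite ler_norml; have := ha k; have := hbk k; rewrite /a /b; lra.
split=> //; apply/andP; split.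
  rewrite -subr_le0; apply: (@geo_zero c (D / (1 - c)) _); first by rewrite c0 c1.
  move=> k; have := main k; rewrite ler_norml /T => /andP[h1 h2]; have := hb k; lra.
rewrite -subr_le0; apply: (@geo_zero c (D / (1 - c)) _); first by rewrite c0 c1.
move=> k; have := main k; rewrite ler_norml /T => /andP[h1 h2]; have := hb k; lra.
Qed.

End Lim.


Section Fix.
Variable R : realType.
Local Notation C := (R[i]).
Variable n : nat.

Lemma vnorm_ext (u w : 'I_n -> C) : (forall k, u k = w k) -> vnorm_inf u = vnorm_inf w.
Proof. by move=> h; rewrite /vnorm_inf; apply: eq_bigr => k _; rewrite h. Qed.

Lemma in_civec_ext (u w : 'I_n -> C) (I : civec R n) :
  (forall k, u k = w k) -> in_civec u I -> in_civec w I.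
Proof. by move=> h hu k; rewrite -h. Qed.

Lemma fixpoint (I : civec R n) (G : ('I_n -> C) -> 'I_n -> C) (c : R) (x0 : 'I_n -> C) :
  0 <= c < 1 -> in_civec x0 I ->
  (forall v, in_civec v I -> in_civec (G v) I) ->
  (forall v w, in_civec v I -> in_civec w I ->
     vnorm_inf (fun k => G v k - G w k) <= c * vnorm_inf (fun k => v k - w k)) ->
  exists L, in_civec L I /\ forall k, G L k = L k.
Proof.
move=> /andP[c0 c1] hx0 hGI hGc.
pose s k := iter k G x0.
have hs k : in_civec (s k) I by elim: k => [|k ih] //=; apply: hGI.
pose D := vnorm_inf (fun j => s 1%N j - s 0%N j).
have D0 : 0 <= D by apply: vnorm_ge0.
have hstep k : vnorm_inf (fun j => s k.+1 j - s k j) <= D * c ^+ k.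
  elim: k => [|k ih]; first by rewrite expr0 mulr1.
  apply: le_trans (hGc _ _ (hs k.+1) (hs k)) _.
  by rewrite exprS mulrCA ler_wpM2l.
have coordR j k : `|complex.Re (s k.+1 j) - complex.Re (s k j)| <= D * c ^+ k.
  rewrite -ReB; apply: le_trans (cmod_Re _) _; apply: le_trans (hstep k).
  exact: (vnorm_coord (fun j => s k.+1 j - s k j)).
have coordI j k : `|complex.Im (s k.+1 j) - complex.Im (s k j)| <= D * c ^+ k.
  rewrite -ImB; apply: le_trans (cmod_Im _) _; apply: le_trans (hstep k).
  exact: (vnorm_coord (fun j => s k.+1 j - s k j)).
pose Lre j := limv (fun k => complex.Re (s k j)) D c.
pose Lim j := limv (fun k => complex.Im (s k j)) D c.
have hc : 0 <= c < 1 by rewrite c0 c1.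
have hRe j := limvP hc D0 (fun k => (hs k j).1) (coordR j).
have hIm j := limvP hc D0 (fun k => (hs k j).2) (coordI j).
pose L j : C := (Lre j +i* Lim j)%C.
have LI : in_civec L I by move=> j; split; [exact: (hRe j).1 | exact: (hIm j).1].
pose T k := D / (1 - c) * c ^+ k.
have T0 k : 0 <= T k by rewrite /T mulr_ge0 ?exprn_ge0 ?divr_ge0 // subr_ge0 ltW.
have hLs k : vnorm_inf (fun j => L j - s k j) <= T k *+ 2.
  apply: vnorm_le; first by rewrite mulrn_wge0.
  move=> j; apply: le_trans (cmod_le _) _; rewrite mulr2n; apply: lerD.
    by rewrite ReB; exact: (hRe j).2.
  by rewrite ImB; exact: (hIm j).2.
exists L; split => //.
have hN : vnorm_inf (fun j => G L j - L j) <= 0.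
  apply: (@geo_zero _ c ((c *+ 2 + 2) * (D / (1 - c))) _ hc) => k.
  have e : vnorm_inf (fun j => G L j - L j) =
     vnorm_inf (fun j => (G L j - G (s k) j) + - (L j - s k.+1 j)).
    by apply: vnorm_ext => j; rewrite /s /= opprB addrA subrK.
  rewrite e; apply: le_trans (vnormD _ _) _; rewrite vnormN.
  apply: le_trans (lerD (hGc _ _ LI (hs k)) (hLs k.+1)) _.
  have hck : c ^+ k.+1 <= c ^+ k by rewrite exprS ler_piMl ?exprn_ge0 // ltW.
  have := ler_wpM2l c0 (hLs k).
  rewrite /T exprS; set E := D / (1 - c).
  have E0 : 0 <= E by rewrite /E divr_ge0 // subr_ge0 ltW.
  have ck0 : 0 <= c ^+ k by rewrite exprn_ge0.
  have h1 : 0 <= vnorm_inf (fun j => L j - s k j) by apply: vnorm_ge0.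
  move=> h; rewrite mulr2n in h *. 
  have : E * (c * c ^+ k) <= E * c ^+ k by rewrite ler_wpM2l // -exprS.
  nra.
move=> k; apply/eqP; rewrite -subr_eq0; apply/eqP.
exact: (vnorm_eq0 hN k).
Qed.

End Fix.


Section Alg.
Variable R : rcfType.
Local Notation C := (R[i]).
Variable n : nat.

Lemma Bmul (Y M : 'M[C]_n) (d : 'I_n -> C) i :
  \sum_j d j * (1%:M - Y *m M) i j = d i - \sum_k Y i k * \sum_j M k j * d j.
Proof.
under eq_bigr do rewrite !mxE mulrBr.
rewrite sumrB; congr (_ - _).
  rewrite (bigD1 i) //= eqxx mulr1 big1 ?addr0 // => j hj.
  by rewrite eq_sym (negbTE hj) mulr0.
under eq_bigr do rewrite mulr_sumr.
rewrite exchange_big /=; apply: eq_bigr => k _; rewrite mulr_sumr.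
by apply: eq_bigr => j _; rewrite mulrCA [d j * _]mulrC.
Qed.

Lemma conj_polyF (P : 'I_n -> {mpoly R[n]}) (z : 'I_n -> C) i :
  polyF P (fun k => conjc (z k)) i = conjc (polyF P z i).
Proof.
rewrite /polyF.
rewrite !mevalE.
rewrite rmorph_sum.
apply: eq_bigr => m _.
rewrite rmorphM rmorph_prod.
rewrite mcoeff_map_mpoly.
congr (_ * _); first exact: (esym (conjc_real _)).
by apply: eq_bigr => k _; rewrite rmorphXn.
Qed.

Lemma unit_kernel (Y : 'M[C]_n) (u : 'I_n -> C) :
  Y \in unitmx -> (forall i, \sum_j Y i j * u j = 0) -> forall j, u j = 0.
Proof.
move=> hY h j.
have e : Y *m (\col_k u k) = 0.
  by apply/matrixP => a b; rewrite !mxE; under eq_bigr do rewrite mxE; exact: h.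
have : (\col_k u k) = 0 by rewrite -(mulKmx hY (\col_k u k)) e mulmx0.
by move/matrixP => /(_ j 0); rewrite !mxE.
Qed.

End Alg.

Unset Implicit Arguments.

Theorem corollary4p12 (R : realType) (n : nat) (P : 'I_n -> {mpoly R[n]})
  (bF : civec R n -> civec R n) (bJ : civec R n -> cimat R n) (I : civec R n) :
  is_enclosure (polyF P) bF ->
  is_mat_enclosure (polyJF P) bJ ->
  civec_wf I ->
  (exists (x : 'I_n -> R[i]) (Y : 'M[R[i]]_n),
     [/\ in_civec x I, Y \in unitmx,
         civec_sub (krawczyk bF bJ x Y I) I,
         (exists c, imat_norm_is (msub (mpt 1%:M) (mmmul (mpt Y) (bJ I))) c /\
                    Num.sqrt 2 * c < 1) &
         (forall z, in_civec z (krawczyk bF bJ x Y I) -> in_civec (fun k => conjc (z k)) I)]) ->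
  (forall k, 0 < lo (cre (I k))) ->
  exists z : 'I_n -> R[i],
    [/\ in_civec z I, polyF P z = (fun _ => 0),
        (forall w, in_civec w I -> polyF P w = (fun _ => 0) -> w = z) &
        (forall k, complex.Im (z k) = 0 /\ 0 < complex.Re (z k))].
Proof.
move=> hF hJ hwf [x [Y [hx hY hK [c [hc hc1]] hconj]]] hpos.
have c0 := norm_ratio_ge0 hc.
have c1 : c < 1.
  have s1 : 1 <= Num.sqrt (2 : R).
    have : Num.sqrt 1 <= Num.sqrt (2 : R) by rewrite ler_sqrt //; lra.
    by rewrite sqrtr1.
  have h2 : 0 <= (Num.sqrt (2 : R) - 1) * c by rewrite mulr_ge0 // subr_ge0.
  lra.
pose G := fun (v : 'I_n -> R[i]) i => v i - \sum_j Y i j * polyF P v j.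
have hFx : in_civec (polyF P x) (bF (vpt x)) := hF (vpt x) x (in_vpt x).
have hGK : forall v, in_civec v I -> in_civec (G v) (krawczyk bF bJ x Y I).
  move=> v hv; have [M [hM hMV]] := mean_value hJ hx hv.
  apply: (in_civec_ext _ (in_krawczyk Y hFx hv hM)) => i.
  rewrite (Bmul Y M (fun j => v j - x j)) /G.
  have e1 : \sum_k Y i k * \sum_j M k j * (v j - x j) =
      \sum_k Y i k * polyF P v k - \sum_k Y i k * polyF P x k.
    by rewrite -sumrB; apply: eq_bigr => k _; rewrite -hMV mulrBr.
  have e2 : \sum_j polyF P x j * Y i j = \sum_j Y i j * polyF P x j.
    by apply: eq_bigr => j _; rewrite mulrC.
  rewrite e1 e2; ring.
have hGI v : in_civec v I -> in_civec (G v) I.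
  by move=> hv; apply: hK; apply: hGK.
have hGc v w : in_civec v I -> in_civec w I ->
    vnorm_inf (fun k => G v k - G w k) <= c * vnorm_inf (fun k => v k - w k).
  move=> hv hw; have [M [hM hMV]] := mean_value hJ hw hv.
  rewrite (vnorm_ext (u := fun k => G v k - G w k)
                     (w := mapply (1%:M - Y *m M) (fun k => v k - w k))).
    exact: contraction _ hc (in_Bmat Y hM).
  move=> i; rewrite /mapply.
  under eq_bigr do rewrite mulrC.
  rewrite (Bmul Y M (fun j => v j - w j)) /G.
  have e1 : \sum_k Y i k * \sum_j M k j * (v j - w j) =
      \sum_k Y i k * polyF P v k - \sum_k Y i k * polyF P w k.
    by rewrite -sumrB; apply: eq_bigr => k _; rewrite -hMV mulrBr.
  rewrite e1; ring.
have hc01 : 0 <= c < 1 by rewrite c0 c1.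
have [L [hL hGL]] := fixpoint hc01 hx hGI hGc.
have zero_of_fix v : (forall k, G v k = v k) -> forall k, polyF P v k = 0.
  move=> h; apply: (unit_kernel hY) => i.
  have := h i; rewrite /G -{2}[v i]subr0 => /addrI /oppr_inj //.
have fix_of_zero v : (forall k, polyF P v k = 0) -> forall k, G v k = v k.
  by move=> h k; rewrite /G big1 ?subr0 // => j _; rewrite h mulr0.
have uniq w1 w2 : in_civec w1 I -> in_civec w2 I ->
    (forall k, polyF P w1 k = 0) -> (forall k, polyF P w2 k = 0) -> w1 = w2.
  move=> h1 h2 z1 z2; have hn := hGc w1 w2 h1 h2.
  rewrite (vnorm_ext (u := fun k => G w1 k - G w2 k) (w := fun k => w1 k - w2 k)) in hn;
    last by move=> k; rewrite !fix_of_zero.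
  have hn0 : vnorm_inf (fun k => w1 k - w2 k) <= 0.
    have := vnorm_ge0 (fun k => w1 k - w2 k); nra.
  apply/funext => k; apply/eqP; rewrite -subr_eq0; apply/eqP.
  exact: (vnorm_eq0 hn0 k).
have hLz := zero_of_fix L hGL.
exists L; split => //.
- by apply/funext => k; exact: hLz k.
- move=> w hw hw0; apply: uniq => // k; by rewrite hw0.
move=> k.
have hLK : in_civec L (krawczyk bF bJ x Y I) := in_civec_ext hGL (hGK L hL).
have hc' := hconj L hLK.
have zc : forall k, polyF P (fun k => conjc (L k)) k = 0.
  by move=> j; rewrite conj_polyF hLz; exact: conjc0.
have eqL := uniq _ _ hc' hL zc hLz.
split.
  have := congr1 (fun f => complex.Im (f k)) eqL => /=.
  by case: (L k) => a b /= h; lra.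
by apply: lt_le_trans (hpos k) _; case: (hL k) => /andP[].
Qed.
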